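(* Let $\mathcal A(z)$, $\mathcal I$ be as in the context. The spectral abscissa $\zeta(\mathcal A(s))$ is a convex function of $s\in\mathcal I$ and satisfies $\zeta(\mathcal A(0))\le 0$. If $\zeta(\mathcal A(0))<0$, then the equation $\zeta(\mathcal A(s))=0$ admits at most one positive solution $s=\alpha\in\mathcal I$ and at most one negative solution $s=-\beta\in\mathcal I$.
   Context: Let $\mathcal N=\{1,\dots,N\}$. Let $\Pi=(\pi_{nn'})$ be an $N\times N$ infinitesimal generator matrix (nonnegative off-diagonal entries, zero row sums). Let $\Psi(z)$ be diagonal with entries $\psi_n(z)$, each a Lévy exponent $\psi_n(z)=\log E(e^{zL^{(n)}_1})$ of a Lévy process $L^{(n)}$. Let $\Upsilon(z)$ have diagonal entries $1$ and off-diagonal entries $\upsilon_{nn'}(z)$, each the MGF $E(e^{zX_{nn'}})$ of a real random variable ($\upsilon_{nn'}\equiv1$ when $\pi_{nn'}=0$). The domain of an MGF of $X$ is $\{z\in\mathbb C:E(e^{(\operatorname{Re}z)X})<\infty\}$; let $\mathcal S$ be the intersection of the domains of all $\psi_n$ and $\upsilon_{nn'}$ and $\mathcal I=\{\operatorname{Re}z:z\in\mathcal S\}$. Let $\Phi$ be diagonal with nonnegative entries $\phi_n$. Set $\mathcal A(z)=\Psi(z)+\Pi\odot\Upsilon(z)-\Phi$ for $z\in\mathcal S$, with $\odot$ the entrywise product. $\zeta(A)$ denotes the spectral abscissa: the maximum of the real parts of the eigenvalues of $A$. *)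

(* Defs.v *)
From HB Require Import structures.
From mathcomp Require Import all_boot all_order all_algebra.
From mathcomp Require Import all_classical all_reals all_analysis.
From mathcomp Require complex.
Import complex.ComplexField.
Set Implicit Arguments. Unset Strict Implicit. Unset Printing Implicit Defensive.
Import Order.TTheory GRing.Theory Num.Theory.
Import numFieldNormedType.Exports.
Local Open Scope classical_set_scope.
Local Open Scope ring_scope.

Section Defs.
Context (R : realType) (d : measure_display) (T : measurableType d)
  (P : probability T R).

Definition mgf (X : T -> R) (s : R) : \bar R :=
  (\int[P]_x (expR (s * X x))%:E)%E.

Definition in_mgf_domain (X : T -> R) (s : R) : Prop := (mgf X s < +oo)%E.

(** log E(e^{s X}) (meaningful for s in the domain). *)
Definition log_mgf (X : T -> R) (s : R) : R := ln (fine (mgf X s)).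

Definition levy_process (L : R -> T -> R) : Prop :=
  [/\ (forall t, 0 <= t -> measurable_fun setT (L t)),
      P [set x | L 0 x = 0] = 1%E,
      (forall s t (B : set R), 0 <= s -> s <= t -> measurable B ->
         P [set x | B (L t x - L s x)] = P [set x | B (L (t - s) x)]),
      (forall (k : nat) (t : nat -> R) (B : nat -> set R),
         0 <= t 0%N -> (forall i, t i <= t i.+1) ->
         (forall i, measurable (B i)) ->
         P (\bigcap_(i in [set j | (j < k)%N]) [set x | B i (L (t i.+1) x - L (t i) x)])
         = (\prod_(i < k) P [set x | B i (L (t i.+1) x - L (t i) x)%R])%E) &
      (forall eps : R, 0 < eps ->
         (fun h => fine (P [set x | eps < `|L h x|])) @ 0^'+ --> (0 : R))].

Definition levy_exponent (L : R -> T -> R) (s : R) : R := log_mgf (L 1) s.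

End Defs.

(** Spectral abscissa of a real square matrix: the maximum of the real parts
    of its (complex) eigenvalues (the set is finite and nonempty for n > 0,
    so its supremum is this maximum). *)
Definition spectral_abscissa (R : realType) (n : nat) (M : 'M[R]_n) : R :=
  sup [set complex.Re lam | lam in
        [set lam : complex.complex (R : rcfType) |
           @eigenvalue (complex.complex (R : rcfType)) n
             (map_mx (fun r : R => complex.Complex r 0) M) lam]].

Definition Amat (R : realType) (d : measure_display) (T : measurableType d)
  (P : probability T R) (N : nat) (L : 'I_N -> R -> T -> R)
  (X : 'I_N -> 'I_N -> T -> R) (Pi : 'M[R]_N) (phi : 'I_N -> R) (s : R)
  : 'M[R]_N :=
  let Psi := diag_mx (\row_n levy_exponent P (L n) s) in
  let Ups := \matrix_(n, n') (if n == n' then 1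
                              else if Pi n n' == 0 then 1
                              else fine (mgf P (X n n') s)) in
  let Phi := diag_mx (\row_n phi n) in
  Psi + map2_mx *%R Pi Ups - Phi.

(** The set I of real parts of the common domain S. *)
Definition Idom (R : realType) (d : measure_display) (T : measurableType d)
  (P : probability T R) (N : nat) (L : 'I_N -> R -> T -> R)
  (X : 'I_N -> 'I_N -> T -> R) (Pi : 'M[R]_N) : set R :=
  [set s | (forall n, in_mgf_domain P (L n 1) s) /\
           (forall n n', n != n' -> Pi n n' != 0 -> in_mgf_domain P (X n n') s)].

(* Main.v *)
Require Import Defs.
From HB Require Import structures.
From mathcomp Require Import all_boot all_order all_algebra.
From mathcomp Require Import all_classical all_reals all_analysis.
From mathcomp Require Import measurable_realfun.
From mathcomp Require complex.
From mathcomp Require Import lra ring.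
Import Order.TTheory GRing.Theory Num.Theory.
Local Open Scope classical_set_scope.
Local Open Scope ring_scope.
Module LAM.
Import complex.ComplexField.
Import complex.
Set Implicit Arguments. Unset Strict Implicit. Unset Printing Implicit Defensive.
Section LA.
Variable R : realType.
Local Notation C := (complex.complex (R : rcfType)).

Definition eC (n : nat) (A : 'M[R]_n) (l : C) :=
  @eigenvalue C n (map_mx (fun r : R => complex.Complex r 0) A) l.

Lemma ReS n (F : 'I_n -> C) : complex.Re (\sum_k F k) = \sum_k complex.Re (F k).
Proof. by apply: big_morph => //; case=> a b; case=> c d. Qed.
Lemma ImS n (F : 'I_n -> C) : complex.Im (\sum_k F k) = \sum_k complex.Im (F k).
Proof. by apply: big_morph => //; case=> a b; case=> c d. Qed.

Lemma eig_tr (F : fieldType) n (g : 'M[F]_n) a : eigenvalue g^T a = eigenvalue g a.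
Proof.
rewrite /eigenvalue /eigenspace !kermx_eq0 !row_free_unit -unitmx_tr.
by rewrite linearB /= tr_scalar_mx trmxK.
Qed.

Lemma eC_vec n (A : 'M[R]_n) l : eC A l ->
  exists w : 'I_n -> C, (exists k, w k <> 0) /\
    forall j, \sum_k complex.Complex (A j k) 0 * w k = l * w j.
Proof.
pose g := map_mx (fun r : R => complex.Complex r 0) A.
have -> : eC A l = eigenvalue g^T l.
  by rewrite /eC -/g eig_tr.
move/eigenvalueP => [v hv vn0].
exists (fun k => v 0 k); split.
  apply: contra_notP (negP vn0) => h; apply/eqP/matrixP => i k.
  rewrite (ord1 i) mxE; apply: contra_notP h => hk; by exists k.
move=> j; move/matrixP: hv => /(_ 0 j); rewrite !mxE => <-.
by apply: eq_bigr => k _; rewrite !mxE mulrC.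
Qed.


Lemma exists_max n (i0 : 'I_n) (f : 'I_n -> R) : exists j, forall k, f k <= f j.
Proof.
exists (Order.arg_max i0 xpredT f); case: arg_maxP => // j _ h k; exact: h.
Qed.

Lemma exists_min n (i0 : 'I_n) (f : 'I_n -> R) : exists j, forall k, f j <= f k.
Proof.
exists (Order.arg_min i0 xpredT f); case: arg_minP => // j _ h k; exact: h.
Qed.

Definition metzler n (A : 'M[R]_n) := forall i j, i != j -> 0 <= A i j.

Lemma gersh n (A : 'M[R]_n) (z : 'I_n -> R) (c : R) l :
  metzler A -> (forall i, 0 < z i) ->
  (forall j, \sum_k A j k * z k <= c * z j) -> eC A l -> complex.Re l <= c.
Proof.
move=> hM hz hc /eC_vec [w [[k0 hk0] hw]].
pose a k := complex.Re (w k); pose b k := complex.Im (w k).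
pose q k := (a k ^+ 2 + b k ^+ 2) / (z k ^+ 2).
have [j hj] := exists_max k0 q.
have hre : forall j, \sum_k A j k * a k = complex.Re l * a j - complex.Im l * b j.
  move=> i; have := congr1 (@complex.Re _) (hw i); rewrite ReS.
  have -> : \sum_k complex.Re (complex.Complex (A i k) 0 * w k) = \sum_k A i k * a k.
    by apply: eq_bigr => k _; rewrite /a; case: (w k) => wr wi /=; rewrite mul0r subr0.
  move=> ->; rewrite /a /b; case: (l) => lr li; case: (w i) => wr wi /=; lra.
have him : forall j, \sum_k A j k * b k = complex.Re l * b j + complex.Im l * a j.
  move=> i; have := congr1 (@complex.Im _) (hw i); rewrite ImS.
  have -> : \sum_k complex.Im (complex.Complex (A i k) 0 * w k) = \sum_k A i k * b k.
    by apply: eq_bigr => k _; rewrite /b; case: (w k) => wr wi /=; rewrite mul0r addr0.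
  move=> ->; rewrite /a /b; case: (l) => lr li; case: (w i) => wr wi /=; lra.
pose lr := complex.Re l.
have key : lr * (a j ^+ 2 + b j ^+ 2) = \sum_k A j k * (a k * a j + b k * b j).
  have : a j * (\sum_k A j k * a k) + b j * (\sum_k A j k * b k)
      = lr * (a j ^+ 2 + b j ^+ 2) by rewrite hre him /lr; ring.
  move=> <-; rewrite !mulr_sumr -big_split /=; apply: eq_bigr => k _; ring.
have qge0 : forall k, 0 <= q k.
  by move=> k; rewrite /q divr_ge0 // ?addr_ge0 ?sqr_ge0.
have hzj : z j != 0 by rewrite gt_eqF.
have nj : a j ^+ 2 + b j ^+ 2 = q j * z j ^+ 2.
  by rewrite /q divfK // expf_neq0.
have bound : forall k, A j k * (a k * a j + b k * b j) <= A j k * z k * (q j * z j).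
  move=> k; case: (eqVneq k j) => [->|hkj].
    rewrite -mulrA le_eqVlt; apply/orP; left; apply/eqP; congr (_ * _).
    have -> : a j * a j + b j * b j = a j ^+ 2 + b j ^+ 2 by ring.
    rewrite nj; ring.
  rewrite -mulrA; apply: ler_wpM2l; first by apply: hM; rewrite eq_sym.
  have hzk := hz k.
  have hqk : a k ^+ 2 + b k ^+ 2 <= q j * z k ^+ 2.
    by move: (hj k); rewrite {1}/q ler_pdivrMr ?exprn_gt0.
  have lag : (a k * a j + b k * b j) ^+ 2 <= (a k ^+ 2 + b k ^+ 2) * (a j ^+ 2 + b j ^+ 2).
    rewrite -subr_ge0.
    have -> : (a k ^+ 2 + b k ^+ 2) * (a j ^+ 2 + b j ^+ 2) - (a k * a j + b k * b j) ^+ 2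
      = (a k * b j - b k * a j) ^+ 2 by ring.
    exact: sqr_ge0.
  have Y0 : 0 <= z k * (q j * z j).
    by apply: mulr_ge0; [exact: ltW | apply: mulr_ge0 => //; exact: ltW].
  have XY : (a k * a j + b k * b j) ^+ 2 <= (z k * (q j * z j)) ^+ 2.
    apply: (le_trans lag).
    have -> : (z k * (q j * z j)) ^+ 2 = (q j * z k ^+ 2) * (q j * z j ^+ 2) by ring.
    rewrite -nj; apply: ler_wpM2r => //; by rewrite addr_ge0 ?sqr_ge0.
  have [X0|X0] := leP (a k * a j + b k * b j) 0; first exact: le_trans X0 Y0.
  by rewrite -(@ler_pXn2r _ 2) // ?nnegrE ?ltW.
have hpos : 0 < a j ^+ 2 + b j ^+ 2.
  have hk0' : 0 < q k0.
    rewrite /q divr_gt0 ?exprn_gt0 //.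
    rewrite /a /b; case: (w k0) hk0 => ar ai hk /=.
    rewrite lt_neqAle addr_ge0 ?sqr_ge0 // andbT eq_sym paddr_eq0 ?sqr_ge0 // !sqrf_eq0.
    by apply/negP => /andP [/eqP h1 /eqP h2]; apply: hk; rewrite h1 h2.
  by rewrite nj; apply: mulr_gt0; [exact: (lt_le_trans hk0' (hj k0)) | exact: exprn_gt0].
have : lr * (a j ^+ 2 + b j ^+ 2) <= c * (a j ^+ 2 + b j ^+ 2).
  rewrite key; apply: (le_trans (ler_sum _ (fun k _ => bound k))).
  rewrite -mulr_suml nj.
  have -> : c * (q j * z j ^+ 2) = (c * z j) * (q j * z j) by ring.
  apply: ler_wpM2r; first by apply: mulr_ge0 => //; exact: ltW.
  exact: hc.
by rewrite ler_pM2r.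
Qed.

Lemma eC_exists n (hn : (0 < n)%N) (A : 'M[R]_n) : exists l, eC A l.
Proof.
have : size (char_poly (map_mx (fun r : R => complex.Complex r 0) A)) != 1%N.
  by rewrite size_char_poly; move: hn; case: (n).
move/(@closed_rootP C) => [l hl]; exists l; by rewrite /eC eigenvalue_root_char.
Qed.

Lemma row_bound n (A : 'M[R]_n) j :
  \sum_k A j k * 1 <= (\sum_i \sum_k `|A i k|) * 1.
Proof.
rewrite mulr1; apply: (@le_trans _ _ (\sum_k `|A j k|)).
  by apply: ler_sum => k _; rewrite mulr1; exact: ler_norm.
rewrite [X in _ <= X](bigD1 j) //= lerDl; apply: sumr_ge0 => i _; apply: sumr_ge0 => k _.
exact: normr_ge0.
Qed.

Lemma sa_ub n (A : 'M[R]_n) l : metzler A -> eC A l ->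
  complex.Re l <= spectral_abscissa A.
Proof.
move=> hM hl; apply: sup_ubound; last by exists l.
exists (\sum_i \sum_k `|A i k|) => y [lam hlam <-].
apply: (gersh (z := fun _ => 1)) hlam => // j; exact: row_bound.
Qed.

Lemma sa_le n (hn : (0 < n)%N) (A : 'M[R]_n) (z : 'I_n -> R) c :
  metzler A -> (forall i, 0 < z i) ->
  (forall j, \sum_k A j k * z k <= c * z j) -> spectral_abscissa A <= c.
Proof.
move=> hM hz hc; apply: ge_sup.
  by have [l hl] := eC_exists hn A; exists (complex.Re l), l.
by move=> y [lam hlam <-]; exact: (gersh hM hz hc hlam).
Qed.


Lemma mono_u n (A : 'M[R]_n) g (x u : 'I_n -> R) : metzler A ->
  (forall i, 0 < x i) -> (forall i, \sum_k A i k * x k < g * x i) ->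
  (forall i, \sum_k A i k * u k <= g * u i) -> forall i, 0 <= u i.
Proof.
move=> hM hx hAx hAu i.
have [i0 hi0] := exists_min i (fun k => u k / x k).
pose t := u i0 / x i0.
rewrite leNgt; apply/negP => hui.
have ht : t < 0.
  apply: (le_lt_trans (hi0 i)); by rewrite ltr_pdivrMr // mul0r.
have hge : forall k, t * x k <= u k.
  by move=> k; have := hi0 k; rewrite ler_pdivlMr.
have hui0 : u i0 = t * x i0 by rewrite /t divfK // gt_eqF.
have h1 : t * \sum_k A i0 k * x k <= \sum_k A i0 k * u k.
  rewrite mulr_sumr; apply: ler_sum => k _; case: (eqVneq k i0) => [->|hk].
    by rewrite hui0 mulrCA.
  by rewrite mulrCA; apply: ler_wpM2l (hge k); apply: hM; rewrite eq_sym.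
have h2 : t * (g * x i0) < t * \sum_k A i0 k * x k by rewrite ltr_nM2l.
have := lt_le_trans h2 (le_trans h1 (hAu i0)).
by rewrite hui0 mulrCA ltxx.
Qed.


Lemma eig_unit (F : fieldType) n (g : 'M[F]_n) a :
  eigenvalue g a = ~~ (g - a%:M \in unitmx).
Proof. by rewrite /eigenvalue /eigenspace kermx_eq0 row_free_unit. Qed.

Lemma sum_delta n (j : 'I_n) (c : R) (F : 'I_n -> R) :
  \sum_k (c *+ (j == k)) * F k = c * F j.
Proof.
rewrite (bigD1 j) //= eqxx mulr1n big1 ?addr0 // => k hk.
by rewrite eq_sym (negbTE hk) mulr0n mul0r.
Qed.

Lemma pf_lite n (hn : (0 < n)%N) (A : 'M[R]_n) (c0 : R) : metzler A ->
  (forall l, eC A l -> complex.Re l < c0) ->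
  exists x : 'I_n -> R, (forall i, 0 < x i) /\ forall i, \sum_k A i k * x k < c0 * x i.
Proof.
move=> hM hl.
pose G := [set c : R | exists x : 'I_n -> R, (forall i, 0 < x i) /\
   forall i, \sum_k A i k * x k < c * x i].
have [//|nG] := pselect (G c0).
exfalso.
pose K := 1 + \sum_i \sum_k `|A i k|.
have GK : G K.
  exists (fun _ => 1); split => // i.
  apply: (le_lt_trans (row_bound A i)); rewrite /K !mulr1; lra.
have up : forall c c', G c -> c <= c' -> G c'.
  move=> c c' [x [hx h]] hcc; exists x; split => // i.
  apply: (lt_le_trans (h i)); apply: ler_wpM2r => //; exact: ltW.
have lb : forall g, G g -> c0 < g.
  move=> g Gg; rewrite ltNge; apply/negP => hg; apply: nG; exact: up Gg hg.
have hlb : has_lbound G by exists c0 => g /lb /ltW.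
have hinf : has_inf G by split; [exists K | ].
pose cs := inf G.
have c0cs : c0 <= cs by apply: lb_le_inf; [exists K | move=> g /lb /ltW].
have hunit : (A - cs%:M) \in unitmx.
  apply: contraT => hnu.
  have : eC A (complex.Complex cs 0).
    rewrite /eC eig_unit.
    have -> : map_mx (fun r : R => complex.Complex r 0) A - (complex.Complex cs 0)%:M
        = map_mx (real_complex R) (A - cs%:M) by rewrite map_mxB map_scalar_mx.
    by rewrite map_unitmx.
  by move=> /hl /=; rewrite ltNge c0cs.
pose v := invmx (A - cs%:M) *m const_mx (-1) : 'cV[R]_n.
have hv : (A - cs%:M) *m v = const_mx (-1) by rewrite mulKVmx.
clearbody v.
pose u k := v k 0.
have hu : forall j, \sum_k A j k * u k = cs * u j - 1.
  move=> j; move/matrixP/(_ j 0): hv; rewrite !mxE.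
  under eq_bigr => k _ do rewrite !mxE mulrBl.
  rewrite sumrB sum_delta => h; rewrite /u; lra.
pose Bd := 1 + \sum_k `|u k|.
have hsum0 : 0 <= \sum_k `|u k| by apply: sumr_ge0 => k _; exact: normr_ge0.
have hBd : 0 < Bd by rewrite /Bd; lra.
have hub : forall k, `|u k| < Bd.
  move=> k; rewrite /Bd (bigD1 k) //=.
  have : 0 <= \sum_(i | i != k) `|u i| by apply: sumr_ge0 => i _; exact: normr_ge0.
  lra.
have hBdi : 0 < Bd^-1 by rewrite invr_gt0.
have [g Gg hg] := inf_adherent hBdi hinf.
have csg : cs <= g := ge_inf hlb Gg.
case: (Gg) => x [hx hAx].
have hu0 : forall i, 0 <= u i.
  apply: (mono_u hM hx hAx) => i; rewrite hu.
  have d1 : (g - cs) * Bd < 1 by rewrite -ltr_pdivlMr // div1r; rewrite -/cs in hg; lra.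
  have d2 : (g - cs) * (- u i) <= (g - cs) * Bd.
    apply: ler_wpM2l; first lra.
    apply: ltW; apply: le_lt_trans (hub i); rewrite -normrN; exact: ler_norm.
  have e : (g - cs) * (- u i) = cs * u i - g * u i by ring.
  rewrite e in d2.
  lra.
have hupos : forall i, 0 < u i.
  move=> i; rewrite lt_neqAle hu0 andbT; apply/negP => /eqP hui.
  have := hu i; rewrite (bigD1 i) //= -hui !mulr0 add0r => h.
  have : 0 <= \sum_(k | k != i) A i k * u k.
    apply: sumr_ge0 => k hk; apply: mulr_ge0 (hu0 k); apply: hM; by rewrite eq_sym.
  lra.
pose S := 1 + \sum_k u k.
have hS : forall i, u i < S.
  move=> i; rewrite /S (bigD1 i) //=.
  have : 0 <= \sum_(k | k != i) u k by apply: sumr_ge0 => k _; exact: hu0.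
  lra.
have S0 : 0 < S by apply: le_lt_trans (hu0 (Ordinal hn)) (hS (Ordinal hn)).
pose d := S^-1.
have d0 : 0 < d by rewrite /d invr_gt0.
have Gd : G (cs - d).
  exists u; split => // i; rewrite hu.
  have : d * u i < 1 by rewrite /d mulrC ltr_pdivrMr // mul1r.
  rewrite mulrBl; lra.
have := ge_inf hlb Gd; rewrite -/cs; lra.
Qed.

End LA.
End LAM.

Module PRM.
Set Implicit Arguments. Unset Strict Implicit. Unset Printing Implicit Defensive.
Lemma expR_conv (R : realType) (l p q : R) : 0 <= l -> l <= 1 ->
  expR (l * p + (1 - l) * q) <= l * expR p + (1 - l) * expR q.
Proof.
move=> l0 l1; set m := l * p + (1 - l) * q.
have hp : expR m * (1 + (p - m)) <= expR p.
  have -> : expR p = expR m * expR (p - m) by rewrite -expRD; congr expR; ring.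
  by apply: ler_wpM2l; [exact: expR_ge0 | exact: expR_ge1Dx].
have hq : expR m * (1 + (q - m)) <= expR q.
  have -> : expR q = expR m * expR (q - m) by rewrite -expRD; congr expR; ring.
  by apply: ler_wpM2l; [exact: expR_ge0 | exact: expR_ge1Dx].
have e : l * (expR m * (1 + (p - m))) + (1 - l) * (expR m * (1 + (q - m))) = expR m.
  rewrite /m; ring.
rewrite -[X in X <= _]e; apply: lerD; apply: ler_wpM2l => //; lra.
Qed.

Section PR.
Context (R : realType) (d : measure_display) (T : measurableType d)
  (P : probability T R) (X : T -> R) (hX : measurable_fun setT X).

Lemma mgf_mE (c s : R) : measurable_fun setT (fun x => (c * expR (s * X x))%:E).
Proof.
apply/measurable_EFinP; apply: measurable_funM => //.
apply: measurableT_comp; first exact: measurable_expR.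
by apply: measurable_funM.
Qed.

Lemma mgf_ge0 s : (0 <= mgf P X s)%E.
Proof. by apply: integral_ge0 => x _; rewrite lee_fin expR_ge0. Qed.

Lemma mgf_fin s : in_mgf_domain P X s -> mgf P X s = (fine (mgf P X s))%:E.
Proof. by move=> h; rewrite fineK // ge0_fin_numE // mgf_ge0. Qed.

Lemma mgf_pos s : in_mgf_domain P X s -> 0 < fine (mgf P X s).
Proof.
move=> h; rewrite lt_neqAle fine_ge0 ?mgf_ge0 // andbT; apply/negP => /eqP h0.
have h1 : mgf P X s = 0%E by rewrite mgf_fin // -h0.
have : (\int[P]_x `|(1 * expR (s * X x))%:E|)%E = 0%E.
  rewrite -h1 /mgf; apply: eq_integral => x _.
  by rewrite mul1r gee0_abs // lee_fin expR_ge0.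
move/(ae_eq_integral_abs _ measurableT (mgf_mE 1 s)) => [N [mN PN0 sub]].
have : P [set: T] = 0%E.
  idtac.
  apply: (subset_measure0 _ mN) => //.
  move=> x _; apply: sub => /= /(_ I) /=.
  by move=> /eqP; rewrite eqe mul1r gt_eqF // expR_gt0.
move=> hP; have := probability_setT P; rewrite hP => /eqP.
by rewrite eq_sym onee_eq0.

Qed.

Lemma mgf0 : mgf P X 0 = 1%E.
Proof.
rewrite /mgf; under eq_integral => x _ do rewrite mul0r expR0.
by rewrite integral_cst // mul1e; exact: probability_setT.
Qed.


Lemma mgf_mE1 (s : R) : measurable_fun setT (fun x => (expR (s * X x))%:E).
Proof.
apply/measurable_EFinP; apply: measurableT_comp; first exact: measurable_expR.
by apply: measurable_funM.
Qed.

Lemma mgf_conv s t l : in_mgf_domain P X s -> in_mgf_domain P X t ->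
  0 <= l -> l <= 1 ->
  (mgf P X (l * s + (1 - l) * t) <=
   (expR (l * ln (fine (mgf P X s)) + (1 - l) * ln (fine (mgf P X t))))%:E)%E.
Proof.
move=> hs ht l0 l1.
have ms0 := mgf_pos hs; have mt0 := mgf_pos ht.
set ms := fine (mgf P X s) in ms0 *; set mt := fine (mgf P X t) in mt0 *.
set K := expR _.
have K0 : 0 < K := expR_gt0 _.
pose a := K * l / ms; pose b := K * (1 - l) / mt.
have a0 : 0 <= a by rewrite /a divr_ge0 // ?mulr_ge0 // ltW.
have b0 : 0 <= b by rewrite /b divr_ge0 // ?mulr_ge0 // ?subr_ge0 // ltW.
have pt : forall x, expR ((l * s + (1 - l) * t) * X x) <=
    a * expR (s * X x) + b * expR (t * X x).
  move=> x.
  have h := expR_conv (s * X x - ln ms) (t * X x - ln mt) l0 l1.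
  have e1 : expR ((l * s + (1 - l) * t) * X x) =
      K * expR (l * (s * X x - ln ms) + (1 - l) * (t * X x - ln mt)).
    by rewrite /K -expRD; congr expR; ring.
  rewrite !expRB !lnK ?posrE // in h.
  rewrite e1; apply: (le_trans (ler_wpM2l (ltW K0) h)).
  rewrite /a /b le_eqVlt; apply/orP; left; apply/eqP; ring.
rewrite /mgf.
apply: (@le_trans _ _ (\int[P]_x ((a * expR (s * X x))%:E + (b * expR (t * X x))%:E))%E).
  apply: ge0_le_integral => //.
  - exact: mgf_mE1.
  - by apply: emeasurable_funD; apply: mgf_mE.
  - by move=> x _; rewrite -EFinD lee_fin; exact: pt.
rewrite ge0_integralD //; try exact: mgf_mE; try by move=> x _; rewrite lee_fin mulr_ge0 // expR_ge0.
have ea : forall (c r : R), 0 <= c ->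
    (\int[P]_x (c * expR (r * X x))%:E = c%:E * mgf P X r)%E.
  move=> c r c0; rewrite /mgf -ge0_integralZl_EFin //.
  exact: mgf_mE1.
rewrite !ea // (mgf_fin hs) (mgf_fin ht) -/ms -/mt -!EFinM -EFinD lee_fin.
rewrite /a /b !divfK ?gt_eqF //.
have -> : K * l + K * (1 - l) = K by ring.
by [].
Qed.

End PR.

End PRM.

Section Main.
Variables (R : realType) (d : measure_display) (T : measurableType d)
  (P : probability T R) (N : nat)
  (Pi : 'M[R]_N) (L : 'I_N -> R -> T -> R) (X : 'I_N -> 'I_N -> T -> R)
  (phi : 'I_N -> R).

Lemma Amat_diag s i : Amat P L X Pi phi s i i = levy_exponent P (L i) s + Pi i i - phi i.
Proof. by rewrite /Amat !mxE eqxx !mulr1n mulr1. Qed.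

Lemma Amat_off s i j : i != j -> Amat P L X Pi phi s i j =
  Pi i j * (if Pi i j == 0 then 1 else fine (mgf P (X i j) s)).
Proof. by move=> h; rewrite /Amat !mxE (negbTE h) !mulr0n add0r subr0. Qed.

End Main.

Lemma key_term (R : realType) (p ms mt mu xk xj yk yj lam : R) :
  0 < p -> 0 < ms -> 0 < mt -> mu <= expR (lam * ln ms + (1 - lam) * ln mt) ->
  0 < xk -> 0 < xj -> 0 < yk -> 0 < yj -> 0 <= lam -> lam <= 1 ->
  p * mu * expR (lam * ln xk + (1 - lam) * ln yk) <=
  expR (lam * ln xj + (1 - lam) * ln yj) *
    (lam * (p * ms * xk / xj) + (1 - lam) * (p * mt * yk / yj)).
Proof.
move=> p0 ms0 mt0 hmu xk0 xj0 yk0 yj0 l0 l1.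
have ea : p * ms * xk / xj = expR (ln p + ln ms + ln xk - ln xj).
  by rewrite expRB !expRD !lnK ?posrE.
have eb : p * mt * yk / yj = expR (ln p + ln mt + ln yk - ln yj).
  by rewrite expRB !expRD !lnK ?posrE.
rewrite ea eb.
apply: (@le_trans _ _ (expR (lam * ln xj + (1 - lam) * ln yj) *
   expR (lam * (ln p + ln ms + ln xk - ln xj) + (1 - lam) * (ln p + ln mt + ln yk - ln yj)))).
  rewrite -expRD.
  have -> : lam * ln xj + (1 - lam) * ln yj +
      (lam * (ln p + ln ms + ln xk - ln xj) + (1 - lam) * (ln p + ln mt + ln yk - ln yj))
      = ln p + (lam * ln ms + (1 - lam) * ln mt) + (lam * ln xk + (1 - lam) * ln yk) by ring.
  have e : forall u v, expR (ln p + u + v) = p * expR u * expR v.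
    by move=> u v; rewrite !expRD lnK ?posrE.
  rewrite e.
  apply: ler_wpM2r; first exact: expR_ge0.
  apply: ler_wpM2l => //; exact: ltW.
apply: ler_wpM2l; first exact: expR_ge0.
exact: PRM.expR_conv.
Qed.

Lemma uniq_zero (R : realType) (F : R -> R) (I : set R) : I 0 ->
  (forall s t lam, I s -> I t -> 0 <= lam -> lam <= 1 ->
     F (lam * s + (1 - lam) * t) <= lam * F s + (1 - lam) * F t) ->
  F 0 < 0 -> forall a b, 0 < a -> 0 < b -> I a -> I b -> F a = 0 -> F b = 0 -> a = b.
Proof.
move=> I0 hc F0 a b.
wlog ab : a b / a <= b.
  move=> H ha hb Ia Ib Fa Fb; case: (leP a b) => h; first exact: H.
  by apply/esym; apply: H => //; exact: ltW.
move=> ha hb Ia Ib Fa Fb.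
case: (ltgtP a b) => // hlt; last by move: ab; rewrite leNgt hlt.
exfalso.
pose lam := a / b.
have l0 : 0 <= lam by rewrite /lam divr_ge0 // ltW.
have l1 : lam < 1 by rewrite /lam ltr_pdivrMr // mul1r.
have := hc b 0 lam Ib I0 l0 (ltW l1).
rewrite mulr0 addr0 /lam divfK ?gt_eqF // Fa Fb mulr0 add0r.
have : (1 - a / b) * F 0 < 0 by rewrite pmulr_rlt0 // subr_gt0.
rewrite -/lam; lra.
Qed.

Lemma diag_gen (R : realType) (xj yj zj lam au as_ at_ lu ls lt p f : R) :
  0 < xj -> 0 < yj -> 0 <= zj -> 0 <= lam -> lam <= 1 ->
  au = lu + p - f -> as_ = ls + p - f -> at_ = lt + p - f ->
  lu <= lam * ls + (1 - lam) * lt ->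
  au * zj <= zj * (lam * (as_ * xj / xj) + (1 - lam) * (at_ * yj / yj)).
Proof.
move=> xj0 yj0 zj0 l0 l1 -> -> -> hle.
rewrite (mulfK (negbT (gt_eqF xj0))) (mulfK (negbT (gt_eqF yj0))) mulrC; apply: ler_wpM2l => //.
have -> : lam * (ls + p - f) + (1 - lam) * (lt + p - f) =
  (lam * ls + (1 - lam) * lt) + p - f by ring.
lra.
Qed.

Lemma off0_gen (R : realType) (xk xj yk yj zk zj lam p au as_ at_ cu cs ct : R) :
  p = 0 -> au = p * cu -> as_ = p * cs -> at_ = p * ct ->
  au * zk <= zj * (lam * (as_ * xk / xj) + (1 - lam) * (at_ * yk / yj)).
Proof. by move=> -> -> -> ->; rewrite !mul0r !mulr0 addr0 mulr0. Qed.

Lemma off_gen (R : realType) (p ms mt mu xk xj yk yj lam au as_ at_ : R) :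
  0 < p -> 0 < ms -> 0 < mt -> mu <= expR (lam * ln ms + (1 - lam) * ln mt) ->
  0 < xk -> 0 < xj -> 0 < yk -> 0 < yj -> 0 <= lam -> lam <= 1 ->
  au = p * mu -> as_ = p * ms -> at_ = p * mt ->
  au * expR (lam * ln xk + (1 - lam) * ln yk) <=
  expR (lam * ln xj + (1 - lam) * ln yj) *
    (lam * (as_ * xk / xj) + (1 - lam) * (at_ * yk / yj)).
Proof. by move=> *; subst; apply: key_term. Qed.

Theorem proposition2 (R : realType) (d : measure_display) (T : measurableType d)
  (P : probability T R) (N : nat) (hN : (0 < N)%N)
  (Pi : 'M[R]_N) (L : 'I_N -> R -> T -> R) (X : 'I_N -> 'I_N -> T -> R)
  (phi : 'I_N -> R)
  (hPi_off : forall n n' : 'I_N, n != n' -> 0 <= Pi n n')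
  (hPi_row : forall n : 'I_N, \sum_(n' < N) Pi n n' = 0)
  (hL : forall n, levy_process P (L n))
  (hX : forall n n', measurable_fun setT (X n n'))
  (hphi : forall n, 0 <= phi n) :
  let A := Amat P L X Pi phi in
  let I := Idom P L X Pi in
  (forall s t lam : R, I s -> I t -> 0 <= lam -> lam <= 1 ->
     I (lam * s + (1 - lam) * t) /\
     spectral_abscissa (A (lam * s + (1 - lam) * t))
       <= lam * spectral_abscissa (A s) + (1 - lam) * spectral_abscissa (A t)) /\
  spectral_abscissa (A 0) <= 0 /\
  (spectral_abscissa (A 0) < 0 ->
     (forall a b : R, 0 < a -> 0 < b -> I a -> I b ->
        spectral_abscissa (A a) = 0 -> spectral_abscissa (A b) = 0 -> a = b) /\
     (forall a b : R, 0 < a -> 0 < b -> I (- a) -> I (- b) ->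
        spectral_abscissa (A (- a)) = 0 -> spectral_abscissa (A (- b)) = 0 -> a = b)).
Proof.
move=> A I.
have mL : forall n, measurable_fun setT (L n 1).
  by move=> n; case: (hL n) => hm _ _ _ _; apply: hm; exact: ler01.
have hM : forall s, LAM.metzler (A s).
  move=> s i j hij; rewrite /A Amat_off //; apply: mulr_ge0; first exact: hPi_off.
  case: ifP => _; [exact: ler01 | apply: fine_ge0; exact: PRM.mgf_ge0].
have I0 : I 0.
  split => [n|n n' _ _]; rewrite /in_mgf_domain PRM.mgf0 ?ltry //.
have hconv : forall s t lam : R, I s -> I t -> 0 <= lam -> lam <= 1 ->
     I (lam * s + (1 - lam) * t) /\
     spectral_abscissa (A (lam * s + (1 - lam) * t))
       <= lam * spectral_abscissa (A s) + (1 - lam) * spectral_abscissa (A t).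
  move=> s t lam [hs1 hs2] [ht1 ht2] l0 l1.
  have hIu : I (lam * s + (1 - lam) * t).
    split => [n|n n' hnn' hp].
      exact: le_lt_trans (PRM.mgf_conv (mL n) (hs1 n) (ht1 n) l0 l1) (ltry _).
    exact: le_lt_trans (PRM.mgf_conv (hX n n') (hs2 n n' hnn' hp) (ht2 n n' hnn' hp) l0 l1) (ltry _).
  split => //.
  apply/ler_addgt0Pr => e e0.
  have hlt : forall v : R, v < v + e by move=> v; rewrite ltrDl.
  have [x [hx hxA]] := @LAM.pf_lite R N hN (A s) (spectral_abscissa (A s) + e) (hM s)
    (fun l hl => le_lt_trans (LAM.sa_ub (hM s) hl) (hlt _)).
  have [y [hy hyA]] := @LAM.pf_lite R N hN (A t) (spectral_abscissa (A t) + e) (hM t)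
    (fun l hl => le_lt_trans (LAM.sa_ub (hM t) hl) (hlt _)).
  pose z k := expR (lam * ln (x k) + (1 - lam) * ln (y k)).
  have z0 : forall k, 0 < z k by move=> k; exact: expR_gt0.
  apply: (@le_trans _ _ (lam * (spectral_abscissa (A s) + e) +
                         (1 - lam) * (spectral_abscissa (A t) + e))); last first.
    have gen : forall a b : R, lam * (a + e) + (1 - lam) * (b + e) = lam * a + (1 - lam) * b + e.
      by move=> a b; ring.
    by rewrite gen.
  apply: (@LAM.sa_le R N hN _ z _ (hM _) z0) => j.
  have term : forall k, A (lam * s + (1 - lam) * t) j k * z k <=
      z j * (lam * (A s j k * x k / x j) + (1 - lam) * (A t j k * y k / y j)).
    move=> k; case: (k =P j) => [->|/eqP hkj].
    - have hle : levy_exponent P (L j) (lam * s + (1 - lam) * t) <=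
          lam * levy_exponent P (L j) s + (1 - lam) * levy_exponent P (L j) t.
        rewrite /levy_exponent /log_mgf.
        have hb := PRM.mgf_conv (mL j) (hs1 j) (ht1 j) l0 l1.
        have hfin := le_lt_trans hb (ltry _).
        rewrite (PRM.mgf_fin hfin) lee_fin in hb.
        have hp0 := PRM.mgf_pos (mL j) hfin.
        rewrite -[Z in _ <= Z]expRK ler_ln ?posrE //; exact: expR_gt0.
      have hdu : A (lam * s + (1 - lam) * t) j j =
          levy_exponent P (L j) (lam * s + (1 - lam) * t) + Pi j j - phi j.
        exact: (@Amat_diag _ _ _ P _ Pi L X phi _ j).
      have hds : A s j j = levy_exponent P (L j) s + Pi j j - phi j.
        exact: (@Amat_diag _ _ _ P _ Pi L X phi s j).
      have hdt : A t j j = levy_exponent P (L j) t + Pi j j - phi j.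
        exact: (@Amat_diag _ _ _ P _ Pi L X phi t j).
      exact: (@diag_gen R _ _ _ _ _ _ _ _ _ _ _ _ (hx j) (hy j) (ltW (z0 j)) l0 l1 hdu hds hdt hle).
    - have hjk : j != k by rewrite eq_sym.
      have hou : A (lam * s + (1 - lam) * t) j k = Pi j k *
          (if Pi j k == 0 then 1 else fine (mgf P (X j k) (lam * s + (1 - lam) * t))).
        exact: (@Amat_off _ _ _ P _ Pi L X phi _ j k hjk).
      have hos : A s j k = Pi j k * (if Pi j k == 0 then 1 else fine (mgf P (X j k) s)).
        exact: (@Amat_off _ _ _ P _ Pi L X phi s j k hjk).
      have hot : A t j k = Pi j k * (if Pi j k == 0 then 1 else fine (mgf P (X j k) t)).
        exact: (@Amat_off _ _ _ P _ Pi L X phi t j k hjk).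
      case: (eqVneq (Pi j k) 0) => [hp|hp].
        exact: (@off0_gen R (x k) (x j) (y k) (y j) (z k) (z j) lam _ _ _ _ _ _ _ hp hou hos hot).
      rewrite (negbTE hp) in hou hos hot.
      have p0 : 0 < Pi j k by rewrite lt_neqAle eq_sym hp hPi_off.
      have hu := PRM.mgf_conv (hX j k) (hs2 j k hjk hp) (ht2 j k hjk hp) l0 l1.
      have hfin := le_lt_trans hu (ltry _).
      rewrite (PRM.mgf_fin hfin) lee_fin in hu.
      have ms0 := PRM.mgf_pos (hX j k) (hs2 j k hjk hp).
      have mt0 := PRM.mgf_pos (hX j k) (ht2 j k hjk hp).
      exact: (@off_gen R _ _ _ _ _ _ _ _ _ _ _ _ p0 ms0 mt0 hu (hx k) (hx j) (hy k) (hy j) l0 l1 hou hos hot).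
  apply: (le_trans (ler_sum _ (fun k _ => term k))).
  rewrite -mulr_sumr big_split /= -!mulr_sumr -!mulr_suml.
  rewrite [Z in _ <= Z]mulrC; apply: ler_wpM2l; first exact: ltW.
  apply: lerD.
    apply: ler_wpM2l => //; rewrite ler_pdivrMr //; exact: ltW (hxA j).
  apply: ler_wpM2l; first by rewrite subr_ge0.
  rewrite ler_pdivrMr //; exact: ltW (hyA j).
have hA0 : spectral_abscissa (A 0) <= 0.
  apply: (@LAM.sa_le R N hN (A 0) (fun _ => 1)) => // j.
  have e : forall k, A 0 j k = Pi j k - phi j *+ (j == k).
    move=> k; case: (eqVneq j k) => [<-|hjk].
      apply: eq_trans (@Amat_diag _ _ _ P _ Pi L X phi 0 j) _.
      by rewrite /levy_exponent /log_mgf PRM.mgf0 /= ln1 add0r ?eqxx mulr1n.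
    apply: eq_trans (@Amat_off _ _ _ P _ Pi L X phi 0 j k hjk) _.
    rewrite ?(negbTE hjk) ?mulr0n subr0; case: ifP => _; by rewrite ?PRM.mgf0 /= mulr1.
  under eq_bigr => k _ do rewrite e mulrBl.
  rewrite sumrB LAM.sum_delta.
  have -> : \sum_k Pi j k * 1 = 0.
    by under eq_bigr => k _ do rewrite mulr1; exact: hPi_row.
  have := hphi j; lra.
split => //; split => // hneg; split.
  exact: (@uniq_zero R (fun s => spectral_abscissa (A s)) I I0 (fun s t lam hs ht l0 l1 => (hconv s t lam hs ht l0 l1).2) hneg).
pose F := fun s => spectral_abscissa (A (- s)).
pose I' := fun s => I (- s).
have I'0 : I' 0 by rewrite /I' oppr0.
have hc' : forall s t lam, I' s -> I' t -> 0 <= lam -> lam <= 1 ->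
     F (lam * s + (1 - lam) * t) <= lam * F s + (1 - lam) * F t.
  move=> s t lam hs ht l0 l1; rewrite /F.
  have -> : - (lam * s + (1 - lam) * t) = lam * (- s) + (1 - lam) * (- t) by ring.
  exact: (hconv _ _ _ hs ht l0 l1).2.
have F0 : F 0 < 0 by rewrite /F oppr0.
move=> a b ha hb Ia Ib Fa Fb; exact: (@uniq_zero R F I' I'0 hc' F0 a b ha hb Ia Ib Fa Fb).
Qed.
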